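(* Let $\mathcal{M}=\{p(x\mid\theta):\ x\in\mathcal{X},\ \theta\in\Theta\}$ be a model that has a sufficient statistic $t=t(x)\in\mathcal{T}$ for $\theta$, let $\mathcal{P}$ be a class of priors, $\mathbf{X}=(x_1,\dots,x_M)$ data and $\gamma>0$. Let $T=(t(x_1),\dots,t(x_M))\in\mathcal{T}^M$ and let $\mathcal{M}_t=\{p(t\mid\theta):\ t\in\mathcal{T},\ \theta\in\Theta\}$ be the corresponding model in terms of $t$. Then \[ \pi_{\rm er}(\cdot\mid\mathcal{M},\mathcal{P},\mathbf{X},\gamma)=\pi_{\rm er}(\cdot\mid\mathcal{M}_t,\mathcal{P},T,\gamma), \] i.e. a density is an empirical reference prior for $(\mathcal{M},\mathcal{P},\mathbf{X},\gamma)$ if and only if it is one for $(\mathcal{M}_t,\mathcal{P},T,\gamma)$.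
   Context: For a model $\mathcal{N}=\{p(y\mid\theta)\}$ and prior $\pi$: $p(y\mid\pi)=\int p(y\mid\theta)\pi(\theta)\,\mathrm d\theta$; for data $\mathbf{Y}=(y_1,\dots,y_M)$ the marginal likelihood is $L(\pi\mid\mathcal{N},\mathbf{Y})=\prod_{m=1}^M p(y_m\mid\pi)$; $\mathcal{N}^k$ is the model of $k$ independent replications, $p(\vec y\mid\theta)=\prod_{i=1}^k p(y^{(i)}\mid\theta)$; the expected information is $\mathcal{I}[\pi\mid\mathcal{N}]=\int\int\pi(\theta)p(y\mid\theta)\log\big(p(y\mid\theta)/p(y\mid\pi)\big)\,\mathrm dy\,\mathrm d\theta$. A proper probability density $\pi\in\mathcal{P}$ is an empirical reference prior $\pi_{\rm er}(\cdot\mid\mathcal{N},\mathcal{P},\mathbf{Y},\gamma)$ if for every proper probability density $\tilde\pi\in\mathcal{P}$, $\lim_{k\to\infty}\big((\log L(\pi\mid\mathcal{N},\mathbf{Y})+\gamma\mathcal{I}[\pi\mid\mathcal{N}^k])-(\log L(\tilde\pi\mid\mathcal{N},\mathbf{Y})+\gamma\mathcal{I}[\tilde\pi\mid\mathcal{N}^k])\big)\ge 0$. *)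

(* Defs.v *)
From HB Require Import structures.
From mathcomp Require Import all_boot all_order all_algebra.
From mathcomp Require Import all_classical all_reals all_analysis.
Set Implicit Arguments. Unset Strict Implicit. Unset Printing Implicit Defensive.
Import Order.TTheory GRing.Theory Num.Theory.
Import numFieldNormedType.Exports.
Local Open Scope classical_set_scope.
Local Open Scope ring_scope.

Section EmpiricalReference.
Variable R : realType.

Definition is_model (dT dY : measure_display) (Th : measurableType dT)
  (Y : measurableType dY) (nu : {measure set Y -> \bar R}) (p : Th -> Y -> R) :=
  [/\ measurable_fun setT (fun z : Th * Y => p z.1 z.2),
      (forall th y, 0 <= p th y) &
      (forall th, (\int[nu]_y (p th y)%:E = 1)%E)].

Definition proper_prior (dT : measure_display) (Th : measurableType dT)
  (mu : {measure set Th -> \bar R}) (pi : Th -> R) :=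
  [/\ measurable_fun setT pi, (forall th, 0 <= pi th) &
      (\int[mu]_th (pi th)%:E = 1)%E].

(* q(s|theta) is the density (w.r.t. nuS) of the statistic s = t(x) when
   x ~ p(.|theta): the model M_t "in terms of t". *)
Definition stat_model (dT dX dS : measure_display) (Th : measurableType dT)
  (X : measurableType dX) (S : measurableType dS)
  (nuX : {measure set X -> \bar R}) (nuS : {measure set S -> \bar R})
  (p : Th -> X -> R) (t : X -> S) (q : Th -> S -> R) :=
  [/\ is_model nuS q, measurable_fun setT t &
      forall th (B : set S), measurable B ->
        (\int[nuX]_(x in t @^-1` B) (p th x)%:E = \int[nuS]_(s in B) (q th s)%:E)%E].

(* t is sufficient for theta: the conditional density of x given t(x),
   p(x|theta) / p(t(x)|theta), is a function h(x) not depending on theta. *)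
Definition sufficient (Th X S : Type) (p : Th -> X -> R) (t : X -> S)
  (q : Th -> S -> R) :=
  exists h : X -> R, (forall x, 0 <= h x) /\
    forall th x, p th x = q th (t x) * h x.

(* density of k independent replications, y = (y^(1),...,y^(k)) as a list *)
Definition pk (Th Y : Type) (p : Th -> Y -> R) (th : Th) (ys : seq Y) : R :=
  \prod_(y <- ys) p th y.

Definition marg (dT : measure_display) (Th : measurableType dT) (Y : Type)
  (mu : {measure set Th -> \bar R}) (f : Th -> Y -> R) (pi : Th -> R) (y : Y)
  : \bar R := (\int[mu]_th (f th y * pi th)%:E)%E.

(* iterated integral over Y^k w.r.t. the k-fold product nu^k of a
   nonnegative function (Tonelli) *)
Fixpoint iint (dY : measure_display) (Y : measurableType dY)
  (nu : {measure set Y -> \bar R}) (k : nat) (f : seq Y -> \bar R) : \bar R :=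
  match k with
  | 0 => f [::]
  | k'.+1 => (\int[nu]_y iint nu k' (fun ys => f (y :: ys)))%E
  end.

Definition kint (dY : measure_display) (Y : measurableType dY)
  (nu : {measure set Y -> \bar R}) (k : nat) (f : seq Y -> \bar R) : \bar R :=
  (iint nu k (fun ys => maxe (f ys) 0) - iint nu k (fun ys => maxe (- f ys) 0))%E.

Definition info (dT dY : measure_display) (Th : measurableType dT)
  (Y : measurableType dY) (mu : {measure set Th -> \bar R})
  (nu : {measure set Y -> \bar R}) (p : Th -> Y -> R) (pi : Th -> R) (k : nat)
  : \bar R :=
  (\int[mu]_th ((pi th)%:E *
     kint nu k (fun ys => (pk p th ys *
        ln (pk p th ys / fine (marg mu (pk p) pi ys)))%:E)))%E.

Definition logL (dT : measure_display) (Th : measurableType dT) (Y : Type)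
  (mu : {measure set Th -> \bar R}) (p : Th -> Y -> R) (pi : Th -> R)
  (ys : seq Y) : \bar R :=
  lne (\prod_(y <- ys) marg mu p pi y)%E.

Definition emp_ref_prior (dT dY : measure_display) (Th : measurableType dT)
  (Y : measurableType dY) (mu : {measure set Th -> \bar R})
  (nu : {measure set Y -> \bar R}) (p : Th -> Y -> R) (P : set (Th -> R))
  (ys : seq Y) (gamma : R) (pi : Th -> R) :=
  [/\ P pi, proper_prior mu pi &
    forall pi' : Th -> R, P pi' -> proper_prior mu pi' ->
      exists2 l : \bar R,
        (fun k : nat => (logL mu p pi ys + gamma%:E * info mu nu p pi k)
                   - (logL mu p pi' ys + gamma%:E * info mu nu p pi' k))%E
          @ \oo --> l
        & (0 <= l)%E].

End EmpiricalReference.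

(* Main.v *)
Require Import Defs.
From HB Require Import structures.
From mathcomp Require Import all_boot all_order all_algebra.
From mathcomp Require Import all_classical all_reals all_analysis measurable_realfun.
Import Order.TTheory GRing.Theory Num.Theory.
Import numFieldNormedType.Exports.
Local Open Scope classical_set_scope.
Local Open Scope ring_scope.
Set Implicit Arguments. Unset Strict Implicit.

Lemma measurable_invR (R : realType) : measurable_fun [set: R] (@GRing.inv R).
Proof.
have -> : [set: R] = [set 0] `|` ~` [set 0] by rewrite setUCr.
apply/measurable_funU => //; first by apply: measurableC.
split.
  move=> _ B mB.

  have [B0|B0] := pselect (B 0).
    rewrite (_ : _ `&` _ = [set 0]) //; apply/seteqP; split => [x [-> //]|x ->].
    by split => //=; rewrite invr0.
  rewrite (_ : _ `&` _ = set0) //; apply/seteqP; split => [x [/= -> ]|x //].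
  by rewrite invr0.
apply: open_continuous_measurable_fun.
  rewrite openC.
by apply: accessible_closed_set1; apply: hausdorff_accessible; exact: Rhausdorff.
move=> x; rewrite inE /= => /eqP x0; exact: inv_continuous.
Qed.

Lemma tonelli_meas (R : realType) d1 d2 (T1 : measurableType d1) (T2 : measurableType d2)
  (m2 : {measure set T2 -> \bar R}) (hs : sigma_finite setT m2)
  (f : T1 * T2 -> \bar R) : measurable_fun [set: T1 * T2] f -> (forall z, (0 <= f z)%E) ->
  measurable_fun setT (fun x => (\int[m2]_y f (x, y))%E).
Proof.
move=> mf f0.
pose H2 := isSFinite.Build _ _ _ _ (sfinite_measure_sigma_finite hs).
pose H3 := isSigmaFinite.Build _ _ _ _ hs.
pose m2' := HB.pack_for (SigmaFiniteMeasure.type T2 R) (Measure.sort m2) H2 H3.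
exact: (@measurable_fun_fubini_tonelli_F _ _ T1 T2 R m2' f mf f0).
Qed.

Fixpoint Good (k : nat) {dY} {Y : measurableType dY} {d} {T : measurableType d}
  {du} {U : measurableType du} (F : T -> seq Y -> U) {struct k} : Prop :=
  match k with
  | 0 => measurable_fun setT (fun z => F z [::])
  | k'.+1 => Good k' (fun (zy : T * Y) ys => F zy.1 (zy.2 :: ys))
  end.

Section GoodLemmas.
Context {dY} {Y : measurableType dY}.

Lemma Good_base k d (T : measurableType d) d' (T' : measurableType d') du
  (U : measurableType du) (F : T -> seq Y -> U) (phi : T' -> T) :
  measurable_fun setT phi -> Good k F -> Good k (fun z ys => F (phi z) ys).
Proof.
elim: k d T d' T' F phi => [|k IH] d T d' T' F phi mphi /=.
  by move=> mF; exact: measurableT_comp mF mphi.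
move=> G; apply: (IH _ _ _ _ _ (fun zy : T' * Y => (phi zy.1, zy.2)) _ G).
apply: measurable_fun_pair => //; exact: measurableT_comp mphi measurable_fst.
Qed.

Lemma Good_comp k d (T : measurableType d) du (U : measurableType du)
  dv (V : measurableType dv) (F : T -> seq Y -> U) (h : U -> V) :
  measurable_fun setT h -> Good k F -> Good k (fun z ys => h (F z ys)).
Proof.
elim: k d T F => [|k IH] d T F mh /=; first by move=> mF; exact: measurableT_comp mh mF.
by move=> G; exact: (IH _ _ _ mh G).
Qed.

Lemma Good_cst k d (T : measurableType d) du (U : measurableType du) (F0 : T -> U) :
  measurable_fun setT F0 -> Good k (fun z (_ : seq Y) => F0 z).
Proof.
elim: k d T F0 => [|k IH] d T F0 mF /=; first by [].
by apply: IH; exact: measurableT_comp mF measurable_fst.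
Qed.

Lemma Good_pair k d (T : measurableType d) du (U : measurableType du)
  dv (V : measurableType dv) (F : T -> seq Y -> U) (G : T -> seq Y -> V) :
  Good k F -> Good k G -> Good k (fun z ys => (F z ys, G z ys)).
Proof.
elim: k d T F G => [|k IH] d T F G /=; first by move=> mF mG; exact: measurable_fun_pair.
by move=> GF GG; exact: (IH _ _ _ _ GF GG).
Qed.

Lemma Good_M (R : realType) k d (T : measurableType d) (F G : T -> seq Y -> R) :
  Good k F -> Good k G -> Good k (fun z ys => F z ys * G z ys).
Proof.
move=> GF GG; have := Good_comp (h := fun p : R * R => p.1 * p.2) _ (Good_pair GF GG).
by apply; apply: measurable_funM; [exact: measurable_fst|exact: measurable_snd].
Qed.

Lemma Good_int (R : realType) k d (T : measurableType d) dT (Th : measurableType dT)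
  (m : {measure set Th -> \bar R}) (hs : sigma_finite setT m)
  (F : T * Th -> seq Y -> \bar R) : (forall z ys, (0 <= F z ys)%E) ->
  Good k F -> Good k (fun z ys => (\int[m]_th F (z, th) ys)%E).
Proof.
elim: k d T F => [|k IH] d T F F0 /=.
  by move=> mF; exact: (tonelli_meas hs (f := fun w => F w [::]) mF (fun w => F0 w [::])).
move=> G.
pose F' := fun (w : (T * Y) * Th) ys => F (w.1.1, w.2) (w.1.2 :: ys).
have GF' : Good k F'.
  have := Good_base (phi := fun w : (T * Y) * Th => ((w.1.1, w.2), w.1.2)) _ G.
  apply; apply: measurable_fun_pair.
    apply: measurable_fun_pair; last exact: measurable_snd.
    exact: measurableT_comp measurable_fst measurable_fst.
  exact: measurableT_comp measurable_snd measurable_fst.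
exact: (IH _ _ F' (fun _ _ => F0 _ _) GF').
Qed.

Lemma iint_ge0 (R : realType) k (nu : {measure set Y -> \bar R}) (F : seq Y -> \bar R) :
  (forall ys, (0 <= F ys)%E) -> (0 <= iint nu k F)%E.
Proof.
elim: k F => [|k IH] F F0 /=; first exact: F0.
by apply: integral_ge0 => y _; apply: IH => ys; exact: F0.
Qed.

Lemma Good_iint (R : realType) k d (T : measurableType d)
  (nu : {measure set Y -> \bar R}) (hs : sigma_finite setT nu)
  (F : T -> seq Y -> \bar R) : (forall z ys, (0 <= F z ys)%E) ->
  Good k F -> measurable_fun setT (fun z => iint nu k (F z)).
Proof.
elim: k d T F => [|k IH] d T F F0 /=; first by [].
move=> G; have := IH _ _ _ _ G.
move=> /(_ (fun _ _ => F0 _ _)) mI.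
apply: (tonelli_meas hs (f := fun zy : T * Y => iint nu k (fun ys => F zy.1 (zy.2 :: ys)))) => //.
by move=> z; apply: iint_ge0 => ys; exact: F0.
Qed.

End GoodLemmas.

Lemma Good_map k dX (X : measurableType dX) dY (Y : measurableType dY)
  d (T : measurableType d) du (U : measurableType du)
  (t : X -> Y) (F : T -> seq Y -> U) :
  measurable_fun setT t -> Good k F -> Good k (fun z (xs : seq X) => F z (map t xs)).
Proof.
move=> mt; elim: k d T F => [|k IH] d T F /=; first by [].
move=> G; have := IH _ _ _ G.
move/(Good_base (phi := fun zx : T * X => (zx.1, t zx.2))); apply.
apply: measurable_fun_pair; first exact: measurable_fst.
exact: measurableT_comp mt measurable_snd.
Qed.

Lemma Good_pk (R : realType) k dY (Y : measurableType dY) dT (Th : measurableType dT)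
  d (T : measurableType d) (q : Th -> Y -> R) (g : T -> Th) :
  measurable_fun setT (fun z : Th * Y => q z.1 z.2) -> measurable_fun setT g ->
  Good k (fun z (ys : seq Y) => pk q (g z) ys).
Proof.
move=> mq; elim: k d T g => [|k IH] d T g mg /=.
  by rewrite /pk; under eq_fun do rewrite big_nil; exact: measurable_cst.
have -> : (fun (zy : T * Y) ys => pk q (g zy.1) (zy.2 :: ys)) =
          (fun zy ys => q (g zy.1) zy.2 * pk q (g zy.1) ys).
  by apply/funext => zy; apply/funext => ys; rewrite /pk big_cons.
apply: Good_M; last by apply: IH; exact: measurableT_comp mg measurable_fst.
apply: Good_cst.
have mp : measurable_fun setT (fun zy : T * Y => (g zy.1, zy.2)).
  apply: measurable_fun_pair; last exact: measurable_snd.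
  exact: measurableT_comp mg measurable_fst.
exact: (measurableT_comp mq mp).
Qed.

Lemma iintZ (R : realType) k dY (Y : measurableType dY) (nu : {measure set Y -> \bar R})
  (hs : sigma_finite setT nu) d (T : measurableType d) (F : T -> seq Y -> \bar R) :
  (forall z ys, (0 <= F z ys)%E) -> Good k F ->
  forall z c, 0 <= c -> iint nu k (fun ys => c%:E * F z ys)%E = (c%:E * iint nu k (F z))%E.
Proof.
elim: k d T F => [|k IH] d T F F0 /=; first by [].
move=> G z c c0.
pose F' := fun (zy : T * Y) ys => F zy.1 (zy.2 :: ys).
have F'0 : forall zy ys, (0 <= F' zy ys)%E by move=> *; exact: F0.
transitivity (\int[nu]_y (c%:E * iint nu k (F' (z, y))))%E.
  by apply: eq_integral => y _; rewrite -(IH _ _ F' F'0 G (z, y) c c0).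
apply: ge0_integralZl_EFin => //.
  by move=> y _; apply: iint_ge0.
have := Good_iint hs F'0 G.
move=> mI; apply: (measurableT_comp mI).
by apply: measurable_fun_pair => //; exact: measurable_cst.
Qed.
Import HBNNSimple.

Lemma int_simple (R : realType) dT (T : measurableType dT) dS (S : measurableType dS)
  (m : {measure set T -> \bar R}) (f : T -> R) (phi : T -> S) (h : {nnsfun S >-> R}) :
  measurable_fun setT f -> (forall x, 0 <= f x) -> measurable_fun setT phi ->
  (\int[m]_x ((f x)%:E * (h (phi x))%:E) =
   \sum_(r \in range h) (r%:E * \int[m]_(x in phi @^-1` (h @^-1` [set r])) (f x)%:E))%E.
Proof.
move=> mf f0 mphi.
have mA r : measurable (phi @^-1` (h @^-1` [set r])).
  by rewrite -[X in measurable X]setTI; apply: mphi.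
transitivity (\int[m]_x (\sum_(r \in range h)
    (f x * (r * \1_(phi @^-1` (h @^-1` [set r])) x))%:E))%E.
  apply: eq_integral => x _; rewrite fsumEFin // -mulr_fsumr -EFinM.
  by rewrite (fimfunE h (phi x)).
rewrite ge0_integral_fsum //; last 2 first.
  - move=> r; apply/measurable_EFinP; apply: measurable_funM => //.
    apply: measurable_funM; first exact: measurable_cst.
    exact: measurable_indic.
  - move=> r x _; rewrite lee_fin indicE; case: (boolP (x \in _)) => [|_].
      by rewrite inE /= => <-; rewrite mulr1 mulr_ge0.
    by rewrite mulr0 mulr0.
apply: eq_fsbigr => r; rewrite inE => -[s _ <-].
under eq_integral do rewrite mulrCA EFinM.
rewrite ge0_integralZl_EFin //.
- congr (_ * _)%E; rewrite [RHS]integral_mkcond epatch_indic.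
  by apply: eq_integral => x _; rewrite /= EFinM.
- by move=> x _; rewrite lee_fin mulr_ge0.
- by apply/measurable_EFinP; apply: measurable_funM.
Qed.

Lemma cov (R : realType) dX (X : measurableType dX) dS (S : measurableType dS)
  (nuX : {measure set X -> \bar R}) (nuS : {measure set S -> \bar R})
  (t : X -> S) (f : X -> R) (g : S -> R) :
  measurable_fun setT t -> measurable_fun setT f -> measurable_fun setT g ->
  (forall x, 0 <= f x) -> (forall s, 0 <= g s) ->
  (forall B, measurable B ->
     (\int[nuX]_(x in t @^-1` B) (f x)%:E = \int[nuS]_(s in B) (g s)%:E)%E) ->
  forall Psi : S -> \bar R, measurable_fun setT Psi -> (forall s, (0 <= Psi s)%E) ->
  (\int[nuX]_x ((f x)%:E * Psi (t x)) = \int[nuS]_s ((g s)%:E * Psi s))%E.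
Proof.
move=> mt mf mg f0 g0 hB Psi mPsi Psi0.
pose h := nnsfun_approx measurableT mPsi.
have key n : (\int[nuX]_x ((f x)%:E * (h n (t x))%:E) =
              \int[nuS]_s ((g s)%:E * (h n s)%:E))%E.
  rewrite (int_simple nuX (h n) mf f0 mt).
  rewrite (int_simple nuS (h n) mg g0 (@measurable_id _ S setT)).
  apply: eq_fsbigr => r _; congr (_ * _)%E; rewrite preimage_id hB //.
have cv (T' : Type) (w : T' -> R) (u : T' -> S) y :
    ((w y)%:E * Psi (u y) = limn (fun n => (w y)%:E * (h n (u y))%:E))%E.
  apply/esym/cvg_lim => //; apply: cvgeZl => //.
  exact: (cvg_nnsfun_approx measurableT mPsi (fun x _ => Psi0 x) (x := u y) I).
transitivity (limn (fun n => \int[nuX]_x ((f x)%:E * (h n (t x))%:E)))%E.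
  under eq_integral do rewrite (cv _ f t).
  apply: monotone_convergence => //.
  - move=> n; apply/measurable_EFinP => //.
    apply: measurable_funM => //; exact: measurableT_comp.
  - by move=> n x _; rewrite mule_ge0 // lee_fin.
  - move=> x _ a b ab; apply: lee_wpmul2l; first by rewrite lee_fin.
    by rewrite lee_fin; exact/lefP/nd_nnsfun_approx.
transitivity (limn (fun n => \int[nuS]_s ((g s)%:E * (h n s)%:E)))%E.
  by under eq_fun do rewrite key.
apply/esym.
under eq_integral do rewrite (cv _ g (fun s => s)).
apply: monotone_convergence => //.
- move=> n; apply/measurable_EFinP => //.
  by apply: measurable_funM.
- by move=> n x _; rewrite mule_ge0 // lee_fin.
- move=> x _ a b ab; apply: lee_wpmul2l; first by rewrite lee_fin.
  by rewrite lee_fin; exact/lefP/nd_nnsfun_approx.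
Qed.

Lemma Good_Me (R : realType) k dY (Y : measurableType dY) d (T : measurableType d)
  (F G : T -> seq Y -> \bar R) :
  Good k F -> Good k G -> Good k (fun z ys => (F z ys * G z ys)%E).
Proof.
move=> GF GG; have := Good_comp (h := fun p : \bar R * \bar R => (p.1 * p.2)%E) _ (Good_pair GF GG).
by apply; apply: emeasurable_funM; [exact: measurable_fst|exact: measurable_snd].
Qed.

Lemma iint_cov (R : realType) dX (X : measurableType dX) dS (S : measurableType dS)
  dT (Th : measurableType dT)
  (nuX : {measure set X -> \bar R}) (nuS : {measure set S -> \bar R})
  (hsX : sigma_finite setT nuX) (hsS : sigma_finite setT nuS)
  (p : Th -> X -> R) (q : Th -> S -> R) (t : X -> S) :
  measurable_fun setT (fun z : Th * X => p z.1 z.2) ->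
  measurable_fun setT (fun z : Th * S => q z.1 z.2) -> measurable_fun setT t ->
  (forall th x, 0 <= p th x) -> (forall th s, 0 <= q th s) ->
  (forall th B, measurable B ->
     (\int[nuX]_(x in t @^-1` B) (p th x)%:E = \int[nuS]_(s in B) (q th s)%:E)%E) ->
  forall k d (T : measurableType d) (Phi : T -> seq S -> \bar R),
  (forall z ss, (0 <= Phi z ss)%E) -> Good k Phi ->
  forall th z, iint nuX k (fun ys => (pk p th ys)%:E * Phi z (map t ys))%E =
               iint nuS k (fun ss => (pk q th ss)%:E * Phi z ss)%E.
Proof.
move=> mp mq mt p0 q0 hB k.
elim: k => [|k IH] d T Phi Phi0 G th z /=; first by rewrite /pk !big_nil.
pose Phi' := fun (zs : T * S) ss => Phi zs.1 (zs.2 :: ss).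
have Phi'0 : forall zs ss, (0 <= Phi' zs ss)%E by move=> *; exact: Phi0.
have Gq : forall d' (T' : measurableType d'), Good k (fun (_ : T') (ss : seq S) => (pk q th ss)%:E).
  move=> d' T'; apply: (Good_comp (h := EFin)) => //.
  by apply: (@Good_pk R k _ S _ Th _ T' q (fun _ => th)) => //; exact: measurable_cst.
have Gp : forall d' (T' : measurableType d'), Good k (fun (_ : T') (ys : seq X) => (pk p th ys)%:E).
  move=> d' T'; apply: (Good_comp (h := EFin)) => //.
  by apply: (@Good_pk R k _ X _ Th _ T' p (fun _ => th)) => //; exact: measurable_cst.
pose Psi := fun s => iint nuS k (fun ss => (pk q th ss)%:E * Phi' (z, s) ss)%E.
have mPsi : measurable_fun setT Psi.
  apply: (Good_iint hsS (F := fun (s : S) ss => (pk q th ss)%:E * Phi' (z, s) ss)%E).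
    by move=> s ss; rewrite mule_ge0 // lee_fin; apply: prodr_ge0.
  apply: Good_Me; first exact: Gq.
  apply: (Good_base (phi := fun s : S => (z, s))) => //.
  by apply: measurable_fun_pair => //; exact: measurable_cst.
have Psi0 : forall s, (0 <= Psi s)%E.
  by move=> s; apply: iint_ge0 => ss; rewrite mule_ge0 // lee_fin; apply: prodr_ge0.
transitivity (\int[nuX]_x ((p th x)%:E * Psi (t x)))%E.
  apply: eq_integral => x _; rewrite /Psi -(IH _ _ Phi' Phi'0 G th (z, t x)).
  pose F := fun (w : T * S) ys => ((pk p th ys)%:E * Phi' w (map t ys))%E.
  have F0 : forall w ys, (0 <= F w ys)%E.
    by move=> w ys; rewrite mule_ge0 // lee_fin; apply: prodr_ge0.
  have GF : Good k F by apply: Good_Me; [exact: Gp|exact: Good_map].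
  rewrite -(@iintZ R k _ X nuX hsX _ _ F F0 GF (z, t x) (p th x) (p0 th x)).
  congr (iint _ _ _); apply/funext => ys.
  by rewrite /F /pk big_cons EFinM muleA.
rewrite (@cov R _ X _ S nuX nuS t (p th) (q th) mt) //.
- apply: eq_integral => s _; rewrite /Psi.
  pose F := fun (w : T * S) ss => ((pk q th ss)%:E * Phi' w ss)%E.
  have F0 : forall w ss, (0 <= F w ss)%E.
    by move=> w ss; rewrite mule_ge0 // lee_fin; apply: prodr_ge0.
  have GF : Good k F by apply: Good_Me; [exact: Gq|exact: G].
  rewrite -(@iintZ R k _ S nuS hsS _ _ F F0 GF (z, s) (q th s) (q0 th s)).
  congr (iint _ _ _); apply/funext => ss.
  by rewrite /F /pk big_cons EFinM muleA.
- exact: (measurable_fun_pair2 (f := fun z : Th * X => p z.1 z.2)).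
- exact: (measurable_fun_pair2 (f := fun z : Th * S => q z.1 z.2)).
- exact: hB.
Qed.

Lemma meas_pk (R : realType) dT (Th : measurableType dT) dY (Y : measurableType dY)
  (q : Th -> Y -> R) : measurable_fun setT (fun z : Th * Y => q z.1 z.2) ->
  forall ss, measurable_fun setT (fun th => pk q th ss).
Proof.
move=> mq; elim => [|s ss IH]; rewrite /pk.
  by under eq_fun do rewrite big_nil; exact: measurable_cst.
under eq_fun do rewrite big_cons; apply: measurable_funM => //.
exact: (measurable_fun_pair1 (f := fun z : Th * Y => q z.1 z.2)).
Qed.

Lemma pk_fact (R : realType) (Th X S : Type) (p : Th -> X -> R) (q : Th -> S -> R)
  (t : X -> S) (h : X -> R) : (forall th x, p th x = q th (t x) * h x) ->
  forall th ys, pk p th ys = pk q th (map t ys) * \prod_(y <- ys) h y.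
Proof.
by move=> hp th ys; rewrite /pk big_map -big_split; apply: eq_bigr => y _; exact: hp.
Qed.

Lemma marg_fact (R : realType) dT (Th : measurableType dT) (Y Z : Type)
  (mu : {measure set Th -> \bar R}) (pi : Th -> R)
  (f : Th -> Y -> R) (g : Th -> Z -> R) (u : Y -> Z) (c : Y -> R) :
  measurable_fun setT pi -> (forall th, 0 <= pi th) ->
  (forall y, 0 <= c y) -> (forall th z, 0 <= g th z) ->
  (forall z, measurable_fun setT (fun th => g th z)) ->
  (forall th y, f th y = g th (u y) * c y) ->
  forall y, marg mu f pi y = ((c y)%:E * marg mu g pi (u y))%E.
Proof.
move=> mpi pi0 c0 g0 mg hf y; rewrite /marg.
under eq_integral do rewrite hf -mulrA mulrCA EFinM.
rewrite ge0_integralZl_EFin //.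
  by move=> th _; rewrite lee_fin mulr_ge0.
by apply/measurable_EFinP; apply: measurable_funM.
Qed.

Lemma logL_fact (R : realType) dT (Th : measurableType dT) dX (X : measurableType dX) (S : Type)
  (mu : {measure set Th -> \bar R}) (pi : Th -> R)
  (p : Th -> X -> R) (q : Th -> S -> R) (t : X -> S) (h : X -> R) (xs : seq X) :
  measurable_fun setT pi -> (forall th, 0 <= pi th) ->
  (forall x, 0 <= h x) -> (forall th s, 0 <= q th s) ->
  (forall s, measurable_fun setT (fun th => q th s)) ->
  (forall th x, p th x = q th (t x) * h x) ->
  (forall x, x \in xs -> 0 < h x) ->
  logL mu p pi xs = ((ln (\prod_(x <- xs) h x))%:E + logL mu q pi (map t xs))%E.
Proof.
move=> mpi pi0 h0 q0 mq hp hpos; rewrite /logL big_map.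
rewrite [in LHS](eq_bigr (fun y => ((h y)%:E * marg mu q pi (t y))%E)); last first.
  by move=> y _; exact: (marg_fact mu mpi pi0 h0 q0 mq hp).
rewrite big_split /= -(big_morph _ EFinM erefl).
set P := \prod_(x <- xs) h x.
set M := (\prod_(x <- xs) marg mu q pi (t x))%E.
have P0 : 0 < P by rewrite /P big_seq; apply: prodr_gt0 => x /hpos.
have M0 : (0 <= M)%E.
  by apply: prode_ge0 => s _; apply: integral_ge0 => th _; rewrite lee_fin mulr_ge0.
case: (eqVneq M 0%E) => [->|Mne0].
  by rewrite mule0 le0_lneNy // addeNy.
have Mpos : (0 < M)%E by rewrite lt_def Mne0 M0.
rewrite lneM ?lne_EFin //.
  by rewrite in_itv /= lte_fin P0 leey.
by rewrite in_itv /= Mpos leey.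
Qed.

Lemma ratio_fact (R : realType) (a c : R) (m : \bar R) (l : R -> R) :
  0 <= c -> (a * c) * l ((a * c) / fine ((c%:E * m)%E)) = (a * c) * l (a / fine m).
Proof.
move=> c0; case: (eqVneq c 0) => [->|cne]; first by rewrite !mulr0 !mul0r.
have cpos : 0 < c by rewrite lt_def cne c0.
congr (_ * l _).
have -> : fine (c%:E * m)%E = c * fine m.
  case: m => [r| |] /=; first by rewrite -?EFinM.
    by rewrite mulry gtr0_sg // mul1e /= mulr0.
  by rewrite mulrNy gtr0_sg // mul1e /= mulr0.
by rewrite invfM mulrA -(mulrA a c) mulfV // mulr1.
Qed.

Lemma kint_eq (R : realType) dT (Th : measurableType dT) dX (X : measurableType dX)
  dS (S : measurableType dS)
  (mu : {measure set Th -> \bar R}) (nuX : {measure set X -> \bar R})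
  (nuS : {measure set S -> \bar R})
  (p : Th -> X -> R) (t : X -> S) (q : Th -> S -> R) (h : X -> R) (pi : Th -> R) :
  sigma_finite setT mu -> sigma_finite setT nuX -> sigma_finite setT nuS ->
  measurable_fun setT (fun z : Th * X => p z.1 z.2) ->
  measurable_fun setT (fun z : Th * S => q z.1 z.2) -> measurable_fun setT t ->
  (forall th x, 0 <= p th x) -> (forall th s, 0 <= q th s) ->
  (forall th B, measurable B ->
     (\int[nuX]_(x in t @^-1` B) (p th x)%:E = \int[nuS]_(s in B) (q th s)%:E)%E) ->
  (forall x, 0 <= h x) -> (forall th x, p th x = q th (t x) * h x) ->
  measurable_fun setT pi -> (forall th, 0 <= pi th) ->
  forall k th,
  kint nuX k (fun ys => (pk p th ys * ln (pk p th ys / fine (marg mu (pk p) pi ys)))%:E) =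
  kint nuS k (fun ss => (pk q th ss * ln (pk q th ss / fine (marg mu (pk q) pi ss)))%:E).
Proof.
move=> hsT hsX hsS mp mq mt p0 q0 hB h0 hp mpi pi0 k th.
pose L := fun z ss => ln (pk q z ss / fine (marg mu (pk q) pi ss)).
have ptw ys : pk p th ys * ln (pk p th ys / fine (marg mu (pk p) pi ys)) =
              pk p th ys * L th (map t ys).
  rewrite (marg_fact (f := pk p) (g := pk q) (u := map t)
             (c := fun ys => \prod_(y <- ys) h y) mu mpi pi0); last 4 first.
  - by move=> ys'; apply: prodr_ge0.
  - by move=> th' ss; apply: prodr_ge0.
  - by move=> ss; apply: meas_pk.
  - by move=> th' ys'; apply: pk_fact.
  rewrite (pk_fact hp th ys); apply: ratio_fact; exact: prodr_ge0.
have GL : Good k L.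
  apply: (Good_comp (h := @ln R)); first exact: measurable_ln.
  apply: Good_M; first by apply: (@Good_pk R k _ S _ Th _ Th q (fun z => z)).
  apply: (Good_comp (h := @GRing.inv R)); first exact: measurable_invR.
  apply: (Good_comp (h := @fine R)); first exact: fine_measurable.
  pose F := fun (w : Th * Th) (ss : seq S) => (pk q w.2 ss * pi w.2)%:E.
  have F0 : forall w ss, (0 <= F w ss)%E.
    by move=> w ss; rewrite lee_fin mulr_ge0 //; apply: prodr_ge0.
  have GF : Good k F.
    apply: (Good_comp (h := EFin)) => //; apply: Good_M.
      by apply: (@Good_pk R k _ S _ Th _ _ q snd) => //; exact: measurable_snd.
    by apply: Good_cst; exact: measurableT_comp mpi measurable_snd.
  exact: (Good_int hsT F0 GF).
have GPhi (sg : R -> R) : measurable_fun setT sg ->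
    Good k (fun z ss => (Num.max (sg (L z ss)) 0)%:E).
  move=> msg; apply: (Good_comp (h := fun x => (Num.max (sg x) 0)%:E)) => //.
  apply/measurable_EFinP; apply: measurable_maxr => //.
have Phi0 (sg : R -> R) : forall z ss, (0 <= (Num.max (sg (L z ss)) 0)%:E)%E.
  by move=> z ss; rewrite lee_fin le_max lexx orbT.
rewrite /kint; congr (_ - _)%E.
- transitivity (iint nuX k (fun ys => (pk p th ys)%:E * (Num.max (L th (map t ys)) 0)%:E))%E.
    congr (iint _ _ _); apply/funext => ys.
    by rewrite ptw -EFin_max -EFinM maxr_pMr ?mulr0 //; apply: prodr_ge0.
  rewrite (iint_cov hsX hsS mp mq mt p0 q0 hB (Phi := fun z ss => (Num.max (L z ss) 0)%:E)
             (Phi0 id) (GPhi id (@measurable_id _ R setT)) th th).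
  congr (iint _ _ _); apply/funext => ss.
  by rewrite -EFin_max -EFinM maxr_pMr ?mulr0 //; apply: prodr_ge0.
- transitivity (iint nuX k (fun ys => (pk p th ys)%:E * (Num.max (- L th (map t ys)) 0)%:E))%E.
    congr (iint _ _ _); apply/funext => ys.
    by rewrite ptw -EFinN -EFin_max -EFinM maxr_pMr ?mulr0 ?mulrN //; apply: prodr_ge0.
  rewrite (iint_cov hsX hsS mp mq mt p0 q0 hB (Phi := fun z ss => (Num.max (- L z ss) 0)%:E)
             (Phi0 -%R) (GPhi -%R (measurable_funN (@measurable_id _ R setT))) th th).
  congr (iint _ _ _); apply/funext => ss.
  by rewrite -EFinN -EFin_max -EFinM maxr_pMr ?mulr0 ?mulrN //; apply: prodr_ge0.
Qed.

Lemma ecancel (R : realType) (c : R) (a b a' b' : \bar R) :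
  (((c%:E + a) + b) - ((c%:E + a') + b') = (a + b) - (a' + b'))%E.
Proof.
rewrite -!addeA oppeD; last exact: fin_num_adde_defr.
by rewrite (addeCA b) (addeCA a) addeA subee // add0e.
Qed.

Unset Implicit Arguments.
Set Strict Implicit.

Theorem theorem4 (R : realType) (dT dX dS : measure_display)
  (Th : measurableType dT) (X : measurableType dX) (S : measurableType dS)
  (mu : {measure set Th -> \bar R}) (nuX : {measure set X -> \bar R})
  (nuS : {measure set S -> \bar R})
  (p : Th -> X -> R) (t : X -> S) (q : Th -> S -> R)
  (P : set (Th -> R)) (xs : seq X) (gamma : R) :
  sigma_finite setT mu -> sigma_finite setT nuX -> sigma_finite setT nuS ->
  is_model nuX p ->
  stat_model nuX nuS p t q ->
  sufficient p t q ->
  (forall x, x \in xs -> exists th, 0 < p th x) ->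
  0 < gamma ->
  forall pi : Th -> R,
    emp_ref_prior mu nuX p P xs gamma pi <->
    emp_ref_prior mu nuS q P (map t xs) gamma pi.
Proof.
move=> hsT hsX hsS [mp p0 _] [[mq q0 _] mt hB] [h [h0 hp]] hxs _ pi.
have hpos : forall x, x \in xs -> 0 < h x.
  move=> x /hxs [th Hth]; rewrite lt_def h0 andbT; apply/eqP => hx0.
  by move: Hth; rewrite hp hx0 mulr0 ltxx.
have mqs : forall s, measurable_fun setT (fun th => q th s).
  by move=> s; exact: (measurable_fun_pair1 (f := fun z : Th * S => q z.1 z.2)).
have Linfo : forall pi0, proper_prior mu pi0 -> forall k,
    info mu nuX p pi0 k = info mu nuS q pi0 k.
  move=> pi0 [mpi pi00 _] k; rewrite /info; apply: eq_integral => th _.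
  by rewrite (kint_eq hsT hsX hsS mp mq mt p0 q0 hB h0 hp mpi pi00).
have LlogL : forall pi0, proper_prior mu pi0 ->
    logL mu p pi0 xs = ((ln (\prod_(x <- xs) h x))%:E + logL mu q pi0 (map t xs))%E.
  by move=> pi0 [mpi pi00 _]; exact: logL_fact.
have Eseq : forall pi1 pi2, proper_prior mu pi1 -> proper_prior mu pi2 ->
    (fun k : nat => (logL mu p pi1 xs + gamma%:E * info mu nuX p pi1 k)
                   - (logL mu p pi2 xs + gamma%:E * info mu nuX p pi2 k))%E =
    (fun k : nat => (logL mu q pi1 (map t xs) + gamma%:E * info mu nuS q pi1 k)
                   - (logL mu q pi2 (map t xs) + gamma%:E * info mu nuS q pi2 k))%E.
  move=> pi1 pi2 pr1 pr2; apply/funext => k.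
  by rewrite (LlogL _ pr1) (LlogL _ pr2) (Linfo _ pr1) (Linfo _ pr2) ecancel.
split.
  move=> [Ppi prpi Hall]; split => // pi' Ppi' prpi'.
  have [l hl l0] := Hall pi' Ppi' prpi'.
  by exists l => //; rewrite -(Eseq _ _ prpi prpi').
move=> [Ppi prpi Hall]; split => // pi' Ppi' prpi'.
have [l hl l0] := Hall pi' Ppi' prpi'.
by exists l => //; rewrite (Eseq _ _ prpi prpi').
Qed.
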